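(* Let $n\ge \max\{m,p\}$, $A\in\mathbb{R}^{n\times n}$ symmetric positive definite, $B\in\mathbb{R}^{m\times n}$ of full row rank, $D\in\mathbb{R}^{m\times m}$ symmetric positive semidefinite, and $\widehat A\in\mathbb{R}^{n\times n}$, $\widehat S\in\mathbb{R}^{m\times m}$ symmetric positive definite. Set $\overline A=\widehat A^{-1/2}A\widehat A^{-1/2}$, $\overline D=\widehat S^{-1/2}D\widehat S^{-1/2}$, $R=\widehat S^{-1/2}B\widehat A^{-1/2}$, $\widetilde S=D+B\widehat A^{-1}B^T$, and define $\gamma^A_{\min/\max}=\lambda_{\min/\max}(\widehat A^{-1}A)$, $\gamma^S_{\max}=\lambda_{\max}(\widehat S^{-1}\widetilde S)$, $\gamma^D_{\max}=\lambda_{\max}(\widehat S^{-1}D)$, $\gamma^R_{\min}=\lambda_{\min}(RR^T)$. Assume $1\in[\gamma^A_{\min},\gamma^A_{\max}]$. Let $\zeta\in\mathbb{R}$ satisfy either $$0<\zeta<\min\left\{\gamma^A_{\min},\ \frac{\gamma^R_{\min}}{\gamma^A_{\max}+\gamma^R_{\min}+\gamma^D_{\max}}\right\}\quad\text{or}\quad \zeta\ge\gamma^A_{\max}+\gamma^S_{\max}.$$ Then all eigenvalues of the symmetric matrix $$Z(\zeta)=(1-\zeta)R(\zeta I-\overline A)^{-1}R^T-\overline D+\zeta I\in\mathbb{R}^{m\times m}$$ are either all positive or all negative.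
   Context: $\lambda_{\min}$, $\lambda_{\max}$ denote the smallest and largest eigenvalues (all matrices involved have real spectra). The assumption $1\in[\gamma^A_{\min},\gamma^A_{\max}]$ is a standing assumption of the paper's analysis. *)

(* Defs.v *)
From mathcomp Require Import all_boot all_order all_algebra.
From mathcomp Require Import reals.
Set Implicit Arguments. Unset Strict Implicit. Unset Printing Implicit Defensive.
Import Order.TTheory GRing.Theory Num.Theory.
Local Open Scope ring_scope.

Definition symmx (R : realType) (n : nat) (M : 'M[R]_n) : Prop := M^T = M.

Definition spd (R : realType) (n : nat) (M : 'M[R]_n) : Prop :=
  symmx M /\ forall v : 'rV[R]_n, v != 0 -> 0 < (v *m M *m v^T) 0 0.

Definition spsd (R : realType) (n : nat) (M : 'M[R]_n) : Prop :=
  symmx M /\ forall v : 'rV[R]_n, 0 <= (v *m M *m v^T) 0 0.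

Definition is_lambda_min (R : realType) (n : nat) (M : 'M[R]_n) (g : R) : Prop :=
  eigenvalue M g /\ forall a, eigenvalue M a -> g <= a.

Definition is_lambda_max (R : realType) (n : nat) (M : 'M[R]_n) (g : R) : Prop :=
  eigenvalue M g /\ forall a, eigenvalue M a -> a <= g.

(* Main.v *)
Require Import Defs.
From mathcomp Require Import all_boot all_order all_algebra.
From mathcomp Require Import reals.
From mathcomp Require Import complex.
From mathcomp Require Import ring lra.
Import Order.TTheory GRing.Theory Num.Theory.
Set Implicit Arguments. Unset Strict Implicit.
Local Open Scope ring_scope.

Section Ray.
Variable R : realType.
Import Num.Def.
Local Notation C := (complex R).
Local Notation f := (@real_complex_def R (Phant R)).

Lemma real_f (x : R) : (f x : C) \is Num.real.
Proof. by rewrite complex_real. Qed.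

Lemma conjC_f (x : R) : conjC (f x : C) = f x.
Proof. exact: conj_Creal (real_f x). Qed.

Local Open Scope sesquilinear_scope.
Lemma mapf_tc k l (M : 'M[R]_(k,l)) : (map_mx f M) ^t* = map_mx f M^T.
Proof. by apply/matrixP=> i j; rewrite !mxE conjC_f. Qed.

Lemma mapf00 (X : 'M[R]_1) : map_mx f X 0 0 = f (X 0 0).
Proof. by rewrite mxE. Qed.

Lemma rayleigh k (M : 'M[R]_k) (g : R) : M^T = M ->
  (forall a, eigenvalue M a -> a <= g) ->
  forall v : 'rV[R]_k, (v *m M *m v^T) 0 0 <= g * (v *m v^T) 0 0.
Proof.
move=> Msym Hg v.
set Mc := map_mx f M.
have Mh : Mc \is hermsymmx.
  by apply/is_hermitianmxP; rewrite expr0 scale1r mapf_tc Msym.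
have /orthomx_spectralP Me := hermitian_normalmx Mh.
have dreal := hermitian_spectral_diag_real Mh.
move: Me dreal.
have Pu := spectral_unitarymx Mc. have Pun := spectral_unit Mc.
move: Pu Pun.
set P := spectralmx Mc; set d := spectral_diag Mc => Pu Pun Me dreal.
have invP : invmx P = P^t* := invmx_unitary Pu.
have PtP : P^t* *m P = 1%:M by rewrite -invP mulVmx.
set w := map_mx f v *m P^t*.
have wt : w^t* = P *m (map_mx f v)^t*.
  by rewrite /w trmx_mul map_mxM trmxCK.
have E1 : f ((v *m M *m v^T) 0 0) = (w *m diag_mx d *m w^t*) 0 0.
  rewrite -mapf00.
  by rewrite !map_mxM -/Mc -mapf_tc {1}Me invP wt /w !mulmxA.
have E2 : f ((v *m v^T) 0 0) = (w *m w^t*) 0 0.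
  rewrite -mapf00.
  by rewrite !map_mxM -mapf_tc wt /w mulmxA -(mulmxA _ _ P) PtP mulmx1.
have Hd : forall j, d 0 j <= f g.
  move=> j.
  have dj : d 0 j = f (complex.Re (d 0 j)).
    have := mxOverP dreal 0 j; case: (d 0 j) => a b.
    by rewrite complex_real => /eqP ->.
  rewrite dj lecR; apply: Hg.
  rewrite eigenvalue_root_char -(fmorph_root f) map_char_poly.
  suff H: root (char_poly Mc) (d 0 j) by move: H; rewrite {1}dj.
  rewrite -eigenvalue_root_char.
  apply/eigenvalueP; exists (row j P).
    have PM : P *m Mc = diag_mx d *m P.
      by rewrite {1}Me !mulmxA mulmxV // mul1mx.
    by rewrite -row_mul PM row_mul row_diag_mx -scalemxAl -rowE.
  apply/negP => /eqP rj0.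
  have : row j (P *m invmx P) = row j 1%:M by rewrite mulmxV.
  rewrite row_mul rj0 mul0mx => /rowP /(_ j); rewrite !mxE eqxx /=.
  by move/eqP; rewrite eq_sym oner_eq0.
have : f ((v *m M *m v^T) 0 0) <= f (g * (v *m v^T) 0 0).
  rewrite rmorphM /= E1 E2 mul_mx_diag !mxE mulr_sumr.
  apply: ler_sum => j _; rewrite !mxE.
  move: (\sum_(_ < k) _) => a.
  rewrite [a * d 0 j]mulrC -!mulrA.
  by apply: ler_wpM2r; [exact: mul_conjC_ge0 | exact: Hd].
by rewrite lecR.
Qed.

Lemma nsq_ge0 k (v : 'rV[R]_k) : 0 <= (v *m v^T) 0 0.
Proof. rewrite mxE; apply: sumr_ge0 => j _; rewrite mxE -expr2; exact: sqr_ge0. Qed.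

Lemma nsq_gt0 k (v : 'rV[R]_k) : v != 0 -> 0 < (v *m v^T) 0 0.
Proof.
move=> vn0; have [j vj] : exists j, v 0 j != 0.
  apply/existsP; apply: contraR vn0 => /existsPn H; apply/eqP/rowP => j.
  by rewrite mxE; move/negbNE/eqP: (H j).
rewrite mxE (bigD1 j) //= mxE -expr2.
apply: (@lt_le_trans _ _ (v 0 j ^+ 2)); first by rewrite lt_def sqr_ge0 sqrf_eq0 vj.
rewrite lerDl; apply: sumr_ge0 => i _; rewrite mxE -expr2; exact: sqr_ge0.
Qed.

Lemma spd_unit k (X : 'M[R]_k) : spd X -> X \in unitmx.
Proof.
case=> _ Xp; rewrite unitmxE unitfE; apply/negP => /det0P [v vn0 vX].
by have := Xp v vn0; rewrite vX mul0mx mxE ltxx.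
Qed.

Lemma eig_transfer k (S X : 'M[R]_k) a : S \in unitmx ->
  eigenvalue (S *m X *m S) a -> eigenvalue (S *m S *m X) a.
Proof.
move=> Su /eigenvalueP [v vE vn0]; apply/eigenvalueP; exists (v *m invmx S).
  apply: (can_inj (mulmxK Su)); rewrite -scalemxAl mulmxKV // -vE.
  by rewrite !mulmxA mulmxKV.
apply: contraNneq vn0 => e; by rewrite -(mulmxKV Su v) e mul0mx.
Qed.

Lemma eig_sign_pos k (Z : 'M[R]_k) : (forall x : 'rV_k, x != 0 -> 0 < (x *m Z *m x^T) 0 0) ->
  forall a, eigenvalue Z a -> 0 < a.
Proof.
move=> H a /eigenvalueP [v vE vn0]; have := H v vn0.
rewrite vE -scalemxAl mxE => h.
by rewrite -(pmulr_lgt0 _ (nsq_gt0 vn0)).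
Qed.

Lemma eig_sign_neg k (Z : 'M[R]_k) : (forall x : 'rV_k, x != 0 -> (x *m Z *m x^T) 0 0 < 0) ->
  forall a, eigenvalue Z a -> a < 0.
Proof.
move=> H a /eigenvalueP [v vE vn0]; have := H v vn0.
rewrite vE -scalemxAl mxE => h.
by rewrite -(pmulr_llt0 _ (nsq_gt0 vn0)).
Qed.
Lemma entryD k l (X Y : 'M[R]_(k.+1, l.+1)) : (X + Y) 0 0 = X 0 0 + Y 0 0.
Proof. by rewrite mxE. Qed.
Lemma entryN k l (X : 'M[R]_(k.+1, l.+1)) : (- X) 0 0 = - X 0 0.
Proof. by rewrite mxE. Qed.
Lemma entryZ k l a (X : 'M[R]_(k.+1, l.+1)) : (a *: X) 0 0 = a * X 0 0.
Proof. by rewrite mxE. Qed.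
End Ray.
Unset Implicit Arguments.

Theorem lemma3 (R : realType) (n m : nat)
  (A : 'M[R]_n) (B : 'M[R]_(m, n)) (D : 'M[R]_m)
  (Ahat : 'M[R]_n) (Shat : 'M[R]_m)
  (Ahi : 'M[R]_n) (Shi : 'M[R]_m)
  (gAmin gAmax gSmax gDmax gRmin zeta : R) :
  (m <= n)%N ->
  spd A -> \rank B = m -> spsd D -> spd Ahat -> spd Shat ->
  (* Ahi = Ahat^{-1/2}, Shi = Shat^{-1/2} (the SPD square roots of the inverses) *)
  spd Ahi -> Ahi *m Ahi = invmx Ahat ->
  spd Shi -> Shi *m Shi = invmx Shat ->
  let Abar := Ahi *m A *m Ahi in
  let Dbar := Shi *m D *m Shi in
  let Rm := Shi *m B *m Ahi in
  let Stil := D + B *m invmx Ahat *m B^T in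
  is_lambda_min (invmx Ahat *m A) gAmin ->
  is_lambda_max (invmx Ahat *m A) gAmax ->
  is_lambda_max (invmx Shat *m Stil) gSmax ->
  is_lambda_max (invmx Shat *m D) gDmax ->
  is_lambda_min (Rm *m Rm^T) gRmin ->
  gAmin <= 1 <= gAmax ->
  ((0 < zeta /\ zeta < gAmin /\ zeta < gRmin / (gAmax + gRmin + gDmax))
   \/ gAmax + gSmax <= zeta) ->
  let Z := (1 - zeta) *: (Rm *m invmx (zeta%:M - Abar) *m Rm^T) - Dbar + zeta%:M in
  (forall a, eigenvalue Z a -> 0 < a) \/ (forall a, eigenvalue Z a -> a < 0).
Proof.
move=> mn [Asym Apos] rkB [Dsym Dpos] AhatS ShatS AhiS AhiE ShiS ShiE.
move=> Abar Dbar Rm Stil hAmin hAmax hSmax hDmax hRmin /andP[g1 g2] hz Z.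
have Ahu := spd_unit AhatS. have Shu := spd_unit ShatS.
have Ahiu := spd_unit AhiS. have Shiu := spd_unit ShiS.
case: AhatS => Ahs Ahpos; case: ShatS => Shs Shpos.
case: AhiS => Ahis _; case: ShiS => Shis _.
rewrite /symmx in Asym Dsym Ahs Shs Ahis Shis.
have E1 : forall mu, eigenvalue Abar mu -> gAmin <= mu <= gAmax.
  move=> mu /(eig_transfer Ahiu); rewrite AhiE => h.
  by rewrite (hAmin.2 _ h) (hAmax.2 _ h).
have Abs : Abar^T = Abar by rewrite /Abar !trmx_mul Ahis Asym mulmxA.
have Dbq : forall x : 'rV_m, 0 <= (x *m Dbar *m x^T) 0 0.
  move=> x; have := Dpos (x *m Shi).
  by rewrite trmx_mul Shis /Dbar !mulmxA; apply.
have RRq : forall x : 'rV_m, (x *m (Rm *m Rm^T) *m x^T) 0 0 = ((x *m Rm) *m (x *m Rm)^T) 0 0.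
  by move=> x; rewrite [(x *m Rm)^T]trmx_mul !mulmxA.
have gD0 : 0 <= gDmax.
  have /eigenvalueP [v vE vn0] := hDmax.1.
  set u := v *m invmx Shat.
  have un0 : u != 0.
    by apply: contraNneq vn0 => e; rewrite -(mulmxKV Shu v) -/u e mul0mx.
  have uD : u *m D = gDmax *: (u *m Shat) by rewrite /u -mulmxA vE mulmxKV.
  have h1 := Shpos u un0; have h2 := Dpos u.
  rewrite uD -scalemxAl mxE in h2.
  by rewrite -(pmulr_lge0 _ h1).
have invpos : forall y : 'rV_n, y != 0 -> 0 < (y *m invmx Ahat *m y^T) 0 0.
  move=> y yn0; set z := y *m invmx Ahat.
  have zn0 : z != 0.
    by apply: contraNneq yn0 => e; rewrite -(mulmxKV Ahu y) -/z e mul0mx.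
  have yE : y = z *m Ahat by rewrite /z mulmxKV.
  have := Ahpos z zn0.
  by rewrite [in X in _ -> X]yE [(z *m Ahat)^T]trmx_mul Ahs mulmxA.
have gS0 : 0 < gSmax.
  have /eigenvalueP [v vE vn0] := hSmax.1.
  set u := v *m invmx Shat.
  have un0 : u != 0.
    by apply: contraNneq vn0 => e; rewrite -(mulmxKV Shu v) -/u e mul0mx.
  have uS : u *m Stil = gSmax *: (u *m Shat) by rewrite /u -mulmxA vE mulmxKV.
  have h1 := Shpos u un0.
  have h2 : 0 < (u *m Stil *m u^T) 0 0.
    rewrite /Stil mulmxDr mulmxDl mxE.
    have h3 := Dpos u.
    have uBn0 : u *m B != 0.
      by rewrite mulmx_free_eq0 // /row_free rkB.
    have h4 := invpos _ uBn0.
    rewrite trmx_mul !mulmxA in h4.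
    rewrite !mulmxA; lra.
  rewrite uS -scalemxAl mxE in h2.
  by rewrite -(pmulr_lgt0 _ h1).
have hz_out : zeta < gAmin \/ gAmax < zeta.
  case: hz => [[_ [h _]]|h]; [by left | right; lra].
set N := zeta%:M - Abar.
have Nu : N \in unitmx.
  rewrite unitmxE unitfE; apply/negP => /det0P [v vn0 vN].
  have : eigenvalue Abar zeta.
    apply/eigenvalueP; exists v => //.
    move/eqP: vN; rewrite /N mulmxBr mul_mx_scalar subr_eq0 => /eqP <-.
    done.
  move/E1 => /andP [h1 h2]; case: hz_out => h; clear -h h1 h2; lra.
have Ns : N^T = N by rewrite /N linearB /= tr_scalar_mx Abs.
set W := invmx N.
have Ws : W^T = W by rewrite /W trmx_inv Ns.
have E3 : forall a, eigenvalue W a -> a <= (zeta - gAmax)^-1.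
  move=> a /eigenvalueP [v vE vn0].
  have vN : v = a *: (v *m N) by rewrite scalemxAl -vE -mulmxA mulVmx // mulmx1.
  have a0 : a != 0.
    by apply: contraNneq vn0 => a0; rewrite vN a0 scale0r.
  have vN' : v *m N = a^-1 *: v by rewrite {2}vN scalerA mulVf // scale1r.
  have vA : v *m Abar = (zeta - a^-1) *: v.
    move: vN'; rewrite /N mulmxBr mul_mx_scalar scalerBl => <-.
    by rewrite opprB addrCA subrr addr0.
  have /E1 /andP [m1 m2] : eigenvalue Abar (zeta - a^-1).
    by apply/eigenvalueP; exists v.
  have t1 : a * a^-1 = 1 by rewrite mulfV.
  have c0 : zeta - gAmax != 0 by case: hz_out => h; apply/eqP; lra.
  have t2 : (zeta - gAmax) * (zeta - gAmax)^-1 = 1 by rewrite mulfV.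
  case: hz_out => h.
  - have hc : (zeta - gAmax)^-1 < 0 by rewrite invr_lt0; lra.
    have ha : a < 0 by rewrite -invr_lt0; lra.
    nra.
  - have hc : 0 < (zeta - gAmax)^-1 by rewrite invr_gt0; lra.
    have ha : 0 < a by rewrite -invr_gt0; lra.
    nra.
have Wq : forall y : 'rV_n, (y *m W *m y^T) 0 0 <= (zeta - gAmax)^-1 * (y *m y^T) 0 0.
  exact: rayleigh Ws E3.
have gR0 : 0 <= gRmin.
  have /eigenvalueP [v vE vn0] := hRmin.1.
  have h1 := nsq_gt0 vn0; have h2 := nsq_ge0 (v *m Rm).
  rewrite -RRq vE -scalemxAl mxE in h2.
  by rewrite -(pmulr_lge0 _ h1).
have RRlow : forall x : 'rV_m, gRmin * (x *m x^T) 0 0 <= ((x *m Rm) *m (x *m Rm)^T) 0 0.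
  move=> x.
  have Ms : (- (Rm *m Rm^T))^T = - (Rm *m Rm^T) by rewrite linearN /= trmx_mul trmxK.
  have Me : forall a, eigenvalue (- (Rm *m Rm^T)) a -> a <= - gRmin.
    move=> a /eigenvalueP [v vE vn0].
    have : eigenvalue (Rm *m Rm^T) (- a).
      apply/eigenvalueP; exists v => //.
      by rewrite -[Rm *m Rm^T]opprK mulmxN vE scaleNr.
    move/(hRmin.2); clear; lra.
  have := rayleigh Ms Me x.
  rewrite mulmxN mulNmx mxE -RRq; clear; lra.
have Sq : forall x : 'rV_m, (x *m Dbar *m x^T) 0 0 + ((x *m Rm) *m (x *m Rm)^T) 0 0
    <= gSmax * (x *m x^T) 0 0.
  move=> x.
  have Meq : Dbar + Rm *m Rm^T = Shi *m Stil *m Shi.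
    rewrite /Stil /Dbar /Rm mulmxDr mulmxDl; congr (_ + _).
    by rewrite !trmx_mul Ahis Shis !mulmxA -(mulmxA _ Ahi Ahi) AhiE.
  have Ms : (Dbar + Rm *m Rm^T)^T = Dbar + Rm *m Rm^T.
    by rewrite linearD /= [(Rm *m Rm^T)^T]trmx_mul trmxK /Dbar !trmx_mul Shis Dsym mulmxA.
  have Me : forall a, eigenvalue (Dbar + Rm *m Rm^T) a -> a <= gSmax.
    move=> a; rewrite Meq => /(eig_transfer Shiu); rewrite ShiE.
    exact: hSmax.2.
  have := rayleigh Ms Me x.
  by rewrite mulmxDr mulmxDl mxE -RRq.
have Zq : forall x : 'rV_m, (x *m Z *m x^T) 0 0 =
    (1 - zeta) * ((x *m Rm) *m W *m (x *m Rm)^T) 0 0 - (x *m Dbar *m x^T) 0 0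
    + zeta * (x *m x^T) 0 0.
  move=> x; rewrite /Z mulmxDr mulmxBr mulmxDl mulmxBl.
  rewrite mul_mx_scalar -scalemxAl -scalemxAr -scalemxAl.
  rewrite [(x *m Rm)^T]trmx_mul !mulmxA.
  by rewrite !entryD entryN !entryZ.
case: hz => [[z0 [z1 z2]] | z3].
- right; apply: eig_sign_neg => x xn0; rewrite Zq.
  have s0 := nsq_gt0 xn0.
  have hw := Wq (x *m Rm). have hr := RRlow x. have hd := Dbq x.
  move: hw hr hd s0.
  set s := (x *m x^T) 0 0; set r := ((x *m Rm) *m (x *m Rm)^T) 0 0.
  set w := ((x *m Rm) *m W *m (x *m Rm)^T) 0 0; set dd := (x *m Dbar *m x^T) 0 0.
  set c := (zeta - gAmax)^-1 => hw hr hd s0.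
  have Sp : 0 < gAmax + gRmin + gDmax by lra.
  rewrite ltr_pdivlMr // in z2.
  have ce : c * (zeta - gAmax) = 1 by rewrite mulVf //; apply/eqP; lra.
  have c0 : c < 0 by rewrite invr_lt0; lra.
  have k1 : (1 - zeta) * w <= (1 - zeta) * c * r.
    by rewrite -mulrA ler_wpM2l //; lra.
  have k2 : (1 - zeta) * c * r <= (1 - zeta) * c * (gRmin * s).
    by rewrite ler_wnM2l //; nra.
  have k3 : zeta * (gAmax - zeta) < (1 - zeta) * gRmin by nra.
  have k4 : (1 - zeta) * c * gRmin + zeta < 0 by nra.
  nra.
- left; apply: eig_sign_pos => x xn0; rewrite Zq.
  have s0 := nsq_gt0 xn0.
  have hw := Wq (x *m Rm). have hS := Sq x. have hd := Dbq x.
  have hr := nsq_ge0 (x *m Rm).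
  move: hw hS hd s0 hr.
  set s := (x *m x^T) 0 0; set r := ((x *m Rm) *m (x *m Rm)^T) 0 0.
  set w := ((x *m Rm) *m W *m (x *m Rm)^T) 0 0; set dd := (x *m Dbar *m x^T) 0 0.
  set c := (zeta - gAmax)^-1 => hw hS hd s0 hr.
  have ce : c * (zeta - gAmax) = 1 by rewrite mulVf //; apply/eqP; lra.
  have c0 : 0 < c by rewrite invr_gt0; lra.
  have k1 : (1 - zeta) * c * r <= (1 - zeta) * w.
    by rewrite -mulrA ler_wnM2l //; lra.
  have k2 : 0 < (1 - zeta) * r - (zeta - gAmax) * dd + zeta * (zeta - gAmax) * s.
    have j1 : (zeta - gAmax) * dd <= (zeta - 1) * dd by apply: ler_wpM2r => //; lra.
    have j2 : (zeta - 1) * (dd + r) <= (zeta - 1) * (gSmax * s)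
      by apply: ler_wpM2l => //; lra.
    have j3 : gSmax * s <= (zeta - gAmax) * s by apply: ler_wpM2r => //; lra.
    have j4 : (zeta - 1) * (gSmax * s) <= (zeta - 1) * ((zeta - gAmax) * s)
      by apply: ler_wpM2l => //; lra.
    have j5 : 0 < (zeta - gAmax) * s by apply: mulr_gt0 => //; lra.
    nra.
  have k3 : 0 < (1 - zeta) * c * r - dd + zeta * s.
    have -> : (1 - zeta) * c * r - dd + zeta * s =
      c * ((1 - zeta) * r - (zeta - gAmax) * dd + zeta * (zeta - gAmax) * s)
      + (1 - c * (zeta - gAmax)) * (zeta * s - dd) by ring.
    rewrite ce subrr mul0r addr0.
    by rewrite pmulr_rgt0.
  lra.
Qed.
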